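(* Let $f,g\colon X\to Y$ and $f',g'\colon X'\to Y'$ be continuous maps and let $\alpha\colon X'\to X$ and $\beta\colon Y'\to Y$ be homotopy equivalences such that $\beta\circ f'=f\circ\alpha$ and $\beta\circ g'=g\circ\alpha$. Then for every $u\in H^*(X;R)$, $\mathrm{hw}_{f',g'}(\alpha^*u)=\mathrm{hw}_{f,g}(u)$.
   Context: $R$ is a commutative ring with unit and $H^*(-;R)$ is cohomology with coefficients in $R$. For continuous maps $f,g\colon X\to Y$, the homotopic distance $\mathrm{D}(f,g)$ is the least integer $n\geq 0$ such that there is an open cover $\{U_0,\dots,U_n\}$ of $X$ with $f|_{U_j}\simeq g|_{U_j}$ for all $j$ ($\infty$ if none exists). Homotopy weight: for $u\in H^*(X;R)$, $\mathrm{hw}_{f,g}(u)=k+1$ where $k$ is the greatest integer such that for every topological space $A$ and every continuous map $\phi\colon A\to X$ with $\mathrm{D}(f\circ\phi,g\circ\phi)\leq k$ one has $\phi^*u=0\in H^*(A;R)$; and $\mathrm{hw}_{f,g}(0)=\infty$. *)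

(* Defs.v *)
From HB Require Import structures.
From mathcomp Require Import all_boot all_order all_algebra.
From mathcomp Require Import all_classical all_reals.
From mathcomp Require Import topology normedtype.
From mathcomp Require Import Rstruct Rstruct_topology.


Set Implicit Arguments.
Unset Strict Implicit.
Unset Printing Implicit Defensive.

Import Order.TTheory GRing.Theory Num.Theory.
Local Open Scope classical_set_scope.
Local Open Scope ring_scope.

Notation real := Rdefinitions.R.

(* f|_U ~ g|_U as maps U -> Y (U with the subspace topology): a map
   H : U x [0,1] -> Y, continuous for the subspace topology of U x [0,1]
   in X x R, with H(x,0) = f x and H(x,1) = g x on U. *)
Definition homotopic_on {X Y : topologicalType} (U : set X) (f g : X -> Y) : Prop :=
  exists H : X * real -> Y,
    {within U `*` `[0%R, 1%R], continuous H} /\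
    (forall x, U x -> H (x, 0%R) = f x) /\
    (forall x, U x -> H (x, 1%R) = g x).

Definition homotopic {X Y : topologicalType} (f g : X -> Y) : Prop :=
  homotopic_on setT f g.

Definition homotopy_equivalence {X Y : topologicalType} (a : X -> Y) : Prop :=
  continuous a /\
  exists b : Y -> X, continuous b /\ homotopic (b \o a) idfun /\ homotopic (a \o b) idfun.

Definition hdist_cover {X Y : topologicalType} (f g : X -> Y) (n : nat) : Prop :=
  exists U : 'I_n.+1 -> set X,
    (forall j, open (U j)) /\ (\bigcup_j U j = setT) /\
    (forall j, homotopic_on (U j) f g).

(* D(f,g) <= k  (k an integer; D is the least such n, or infinity). *)
Definition hdist_le {X Y : topologicalType} (f g : X -> Y) (k : int) : Prop :=
  exists n : nat, (n%:Z <= k)%R /\ hdist_cover f g n.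

Definition simplex_space (n : nat) := {ptws 'I_n.+1 -> real}.

Definition std_simplex (n : nat) : set (simplex_space n) :=
  [set x | (forall i, (0 <= x i)%R) /\ (\sum_i x i = 1)%R].
Arguments std_simplex n : clear implicits.

(* i-th face inclusion  Delta^n -> Delta^{n+1} (insert a 0 at coordinate i) *)
Definition face_map (n : nat) (i : 'I_n.+2) (x : simplex_space n)
  : simplex_space n.+1 :=
  fun j => match unlift i j with Some k => x k | None => 0%R end.

(* A singular n-simplex of X is a continuous map Delta^n -> X.  We represent it
   by any map sigma : R^{n+1} -> X continuous on Delta^n; two such maps agreeing
   on Delta^n represent the same simplex. *)
Definition is_sing_simplex {X : topologicalType} {n : nat}
  (s : simplex_space n -> X) : Prop :=
  {within std_simplex n, continuous s}.

Definition cochain (K : comPzRingType) (X : topologicalType) (n : nat) :=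
  (simplex_space n -> X) -> K.

(* A genuine cochain (function on singular simplices): invariant under
   agreement on Delta^n, and 0 on maps that are not singular simplices. *)
Definition is_cochain {K : comPzRingType} {X : topologicalType} {n : nat}
  (c : cochain K X n) : Prop :=
  (forall s t, (forall x, std_simplex n x -> s x = t x) -> c s = c t) /\
  (forall s, ~ is_sing_simplex s -> c s = 0%R).

Definition coboundary {K : comPzRingType} {X : topologicalType} {n : nat}
  (c : cochain K X n) : cochain K X n.+1 :=
  fun s => if `[< is_sing_simplex s >] then
             (\sum_(i < n.+2) (-1) ^+ i * c (s \o face_map i))%R
           else 0%R.

Definition is_cocycle {K : comPzRingType} {X : topologicalType} {n : nat}
  (c : cochain K X n) : Prop :=
  is_cochain c /\ forall s, coboundary c s = 0%R.

Definition is_coboundary {K : comPzRingType} {X : topologicalType} (n : nat)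
  : cochain K X n -> Prop :=
  match n return cochain K X n -> Prop with
  | 0 => fun c => forall s, c s = 0%R
  | m.+1 => fun c => exists b : cochain K X m,
                is_cochain b /\ forall s, c s = coboundary b s
  end.

Definition pullback {K : comPzRingType} {A X : topologicalType} (phi : A -> X)
  {n : nat} (c : cochain K X n) : cochain K A n :=
  fun s => if `[< is_sing_simplex s >] then c (phi \o s) else 0%R.

(* An element u of H^*(X;K) = (+)_n H^n(X;K) is given by a family of
   cocycle representatives u n, all but finitely many of which are
   coboundaries. *)
Definition cohom_elt {K : comPzRingType} {X : topologicalType}
  (u : forall n, cochain K X n) : Prop :=
  (forall n, is_cocycle (u n)) /\
  exists N : nat, forall n, (N < n)%N -> is_coboundary (u n).

Definition cohom_zero {K : comPzRingType} {X : topologicalType}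
  (u : forall n, cochain K X n) : Prop :=
  forall n, is_coboundary (u n).

Definition cohom_pullback {K : comPzRingType} {A X : topologicalType}
  (phi : A -> X) (u : forall n, cochain K X n) : forall n, cochain K A n :=
  fun n => pullback phi (u n).

Definition hw_prop {K : comPzRingType} {X Y : topologicalType} (f g : X -> Y)
  (u : forall n, cochain K X n) (k : int) : Prop :=
  forall (A : topologicalType) (phi : A -> X), continuous phi ->
    hdist_le (f \o phi) (g \o phi) k -> cohom_zero (cohom_pullback phi u).

Definition hw_greatest {K : comPzRingType} {X Y : topologicalType} (f g : X -> Y)
  (u : forall n, cochain K X n) (k : int) : Prop :=
  hw_prop f g u k /\ forall j, hw_prop f g u j -> (j <= k)%R.

(* hw_{f,g}(u) in N u {oo}: None stands for oo. *)
Definition hw {K : comPzRingType} {X Y : topologicalType} (f g : X -> Y)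
  (u : forall n, cochain K X n) : option nat :=
  match pselect (cohom_zero u) with
  | left _ => None
  | right _ =>
      match pselect (exists k, hw_greatest f g u k) with
      | left e => Some `|(projT1 (cid e) + 1)%R|%N
      | right _ => None
      end
  end.

(* Main.v *)
Require Import Defs.
From mathcomp Require Import all_boot all_order all_algebra.
From mathcomp Require Import all_classical all_reals topology normedtype.
From HB Require Import structures.
From mathcomp Require Import Rstruct Rstruct_topology.
From mathcomp Require Import ring lra zify.

Set Implicit Arguments.
Unset Strict Implicit.
Unset Printing Implicit Defensive.
Import Order.TTheory GRing.Theory Num.Theory.
Local Open Scope classical_set_scope.
Local Open Scope ring_scope.

Lemma wcvg {T U : topologicalType} (A : set T) (B : set U) (g : T -> U) x :
  A x -> (forall y, A y -> B (g y)) -> g @ within A (nbhs x) --> g x ->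
  g @ within A (nbhs x) --> within B (nbhs (g x)).
Proof.
move=> Ax AB cg P /= BP.
have h : within A (nbhs x) [set y | B (g y) -> P (g y)] := cg _ BP.
have hA : within A (nbhs x) A by apply: withinT.
change (within A (nbhs x) [set y | P (g y)]).
apply: (filterS _ (filterI h hA)) => y /= [H1 Ay]; exact: H1 (AB _ Ay).
Qed.

Lemma wcomp {T U V : topologicalType} (A : set T) (B : set U) (g : T -> U) (f : U -> V) :
  (forall x, A x -> B (g x)) -> {within A, continuous g} -> {within B, continuous f} ->
  {within A, continuous (f \o g)}.
Proof.
move=> AB /subspace_continuousP cg /subspace_continuousP cf.
apply/subspace_continuousP => x Ax.
apply: cvg_comp (cf _ (AB _ Ax)).
exact: wcvg Ax AB (cg _ Ax).
Qed.

Lemma wpair {T U V : topologicalType} (A : set T) (g1 : T -> U) (g2 : T -> V) :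
  {within A, continuous g1} -> {within A, continuous g2} ->
  {within A, continuous (fun x => (g1 x, g2 x))}.
Proof.
move=> /subspace_continuousP c1 /subspace_continuousP c2.
apply/subspace_continuousP => x Ax.
exact: cvg_pair (c1 _ Ax) (c2 _ Ax).
Qed.

Lemma fst_cont {T U : topologicalType} : continuous (@fst T U).
Proof. by move=> [x y]; apply: cvg_fst. Qed.
Lemma snd_cont {T U : topologicalType} : continuous (@snd T U).
Proof. by move=> [x y]; apply: cvg_snd. Qed.

Lemma cont_pair {T U V : topologicalType} (g1 : T -> U) (g2 : T -> V) :
  continuous g1 -> continuous g2 -> continuous (fun x => (g1 x, g2 x)).
Proof. by move=> c1 c2 x; exact: cvg_pair (c1 x) (c2 x). Qed.

Lemma rc_add {T : topologicalType} (f g : T -> real) :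
  continuous f -> continuous g -> continuous (fun x => f x + g x).
Proof. by move=> cf cg x; exact: (@cvgD _ real^o _ _ _ f g _ _ (cf x) (cg x)). Qed.

Lemma rc_sub {T : topologicalType} (f g : T -> real) :
  continuous f -> continuous g -> continuous (fun x => f x - g x).
Proof. by move=> cf cg x; exact: (@cvgB _ real^o _ _ _ f g _ _ (cf x) (cg x)). Qed.

Lemma rc_cst {T : topologicalType} (c : real) : continuous (fun _ : T => c).
Proof. by move=> x; exact: cvg_cst. Qed.

Lemma rc_mul2 : continuous (fun t : real => 2 * t).
Proof.
have h : continuous (fun t : real^o => 2 * t) by exact: (@mulrl_continuous _ (2 : real^o)).
exact: h.
Qed.

Lemma homotopic_on_comp {X Y Z : topologicalType} (U : set X) (f g : X -> Y) (k : Y -> Z) :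
  continuous k -> homotopic_on U f g -> homotopic_on U (k \o f) (k \o g).
Proof.
move=> ck [H [cH [H0 H1]]]; exists (k \o H); split; last split.
- apply: (@wcomp _ _ _ _ setT) => //; exact: continuous_subspaceT.
- by move=> x Ux /=; rewrite H0.
- by move=> x Ux /=; rewrite H1.
Qed.

Lemma homotopic_on_pre {A X Y : topologicalType} (U : set A) (V : set X) (f g : X -> Y)
  (phi : A -> X) :
  continuous phi -> (forall a, U a -> V (phi a)) -> homotopic_on V f g ->
  homotopic_on U (f \o phi) (g \o phi).
Proof.
move=> cp UV [H [cH [H0 H1]]]; exists (H \o (fun p => (phi p.1, p.2))); split; last split.
- apply: (wcomp _ _ cH).
    by move=> [a t] [/= Ua Ht]; split => //=; apply: UV.
  apply: continuous_subspaceT; apply: cont_pair; last exact: snd_cont.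
  by move=> p; apply: (@continuous_comp _ _ _ fst phi); [exact: fst_cont | exact: cp].
- by move=> x Ux /=; rewrite H0 //; apply: UV.
- by move=> x Ux /=; rewrite H1 //; apply: UV.
Qed.

Lemma homotopic_on_sym {X Y : topologicalType} (U : set X) (f g : X -> Y) :
  homotopic_on U f g -> homotopic_on U g f.
Proof.
move=> [H [cH [H0 H1]]]; exists (H \o (fun p => (p.1, 1 - p.2))); split; last split.
- apply: (wcomp _ _ cH).
    move=> [a t] [/= Ua]; rewrite /= in_itv /= => /andP[t0 t1]; split => //=.
    by rewrite in_itv /= subr_ge0 t1 lerBlDr lerDl t0.
  apply: continuous_subspaceT; apply: cont_pair; first exact: fst_cont.
  apply: rc_sub; [exact: rc_cst | exact: snd_cont].
- by move=> x Ux /=; rewrite subr0 H1.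
- by move=> x Ux /=; rewrite subrr H0.
Qed.


Lemma cvg_withinU {T U : topologicalType} (F : set_system T) {FF : Filter F}
  (D D1 D2 : set T) (f : T -> U) (l : U) :
  D `<=` D1 `|` D2 -> f @ within D1 F --> l -> f @ within D2 F --> l ->
  f @ within D F --> l.
Proof.
move=> DD c1 c2 P lP.
have h1 := c1 _ lP; have h2 := c2 _ lP.
have h1' : F (fun x => D1 x -> P (f x)) := h1.
have h2' : F (fun x => D2 x -> P (f x)) := h2.
change (F (fun x => D x -> P (f x))).
apply: (filterS _ (filterI h1' h2')) => x [a b] Dx.
by case: (DD _ Dx) => [/a|/b].
Qed.

Lemma within_empty {T U : topologicalType} (F : set_system T) {FF : Filter F}
  (D : set T) (f : T -> U) (l : U) : F (~` D) -> f @ within D F --> l.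
Proof.
move=> FD P _; change (F (fun x => D x -> P (f x))).
by apply: (filterS _ FD) => x nDx Dx.
Qed.

Lemma nbhs_snd_gt {X : topologicalType} (z : X * real) (c : real) :
  c < z.2 -> nbhs z [set p | c < p.2].
Proof.
move=> cz; have : nbhs z.2 [set t | c < t].
  by apply: open_nbhs_nbhs; split => //; exact: open_gt.
by move=> h; exact: (@snd_cont _ _ z _ h).
Qed.

Lemma nbhs_snd_lt {X : topologicalType} (z : X * real) (c : real) :
  z.2 < c -> nbhs z [set p | p.2 < c].
Proof.
move=> cz; have : nbhs z.2 [set t | t < c].
  by apply: open_nbhs_nbhs; split => //; exact: open_lt.
by move=> h; exact: (@snd_cont _ _ z _ h).
Qed.

Lemma homotopic_on_trans {X Y : topologicalType} (U : set X) (f g h : X -> Y) :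
  homotopic_on U f g -> homotopic_on U g h -> homotopic_on U f h.
Proof.
move=> [H1 [c1 [H10 H11]]] [H2 [c2 [H20 H21]]].
pose H p := if p.2 <= 1/2 then H1 (p.1, 2 * p.2) else H2 (p.1, 2 * p.2 - 1).
pose D1 := U `*` `[0%R, 1/2] : set (X * real).
pose D2 := U `*` `[1/2, 1%R] : set (X * real).
have cs1 : {within D1, continuous (H1 \o (fun p => (p.1, 2 * p.2)))}.
  apply: (wcomp _ _ c1).
    move=> [x t] [/= Ux]; rewrite /= !in_itv /= => /andP[t0 t1]; split => //=.
    by apply/andP; split; lra.
  apply: continuous_subspaceT; apply: cont_pair; first exact: fst_cont.
  by move=> p; apply: (@continuous_comp _ _ _ snd); [exact: snd_cont | exact: rc_mul2].
have cs2 : {within D2, continuous (H2 \o (fun p => (p.1, 2 * p.2 - 1)))}.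
  apply: (wcomp _ _ c2).
    move=> [x t] [/= Ux]; rewrite /= !in_itv /= => /andP[t0 t1]; split => //=.
    by apply/andP; split; lra.
  apply: continuous_subspaceT; apply: cont_pair; first exact: fst_cont.
  apply: rc_sub; last exact: rc_cst.
  by move=> p; apply: (@continuous_comp _ _ _ snd); [exact: snd_cont | exact: rc_mul2].
have e1 : {within D1, continuous H}.
  apply: (subspace_eq_continuous _ cs1) => -[x t]; rewrite inE => -[/= Ux].
  rewrite /= in_itv /= => /andP[t0 t1].
  rewrite /from_subspace /H /=; case: ifP => [//|/negP nt]; exfalso; apply: nt; exact: t1.
have e2 : {within D2, continuous H}.
  apply: (subspace_eq_continuous _ cs2) => -[x t]; rewrite inE => -[/= Ux].
  rewrite /= in_itv /= => /andP[t0 t1].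
  rewrite /from_subspace /H /=; case: ifP => // tle.
  have -> : t = 1/2 by apply/eqP; rewrite eq_le tle t0.
  have -> : 2 * (1/2) = 1 :> real by field.
  by rewrite subrr H11 // H20.
exists H; split; last split.
- apply/subspace_continuousP => -[x t] [/= Ux]; rewrite /= in_itv /= => /andP[t0 t1].
  apply: (@cvg_withinU _ _ _ _ _ D1 D2).
  + move=> [y s] [/= Uy]; rewrite /= in_itv /= => /andP[s0 s1].
    have [sle|sgt] := lerP s (1/2).
      by left; split => //=; rewrite in_itv /= s0 sle.
    by right; split => //=; rewrite in_itv /= s1 (ltW sgt).
  + have [tle|tgt] := lerP t (1/2).
      by apply: (subspace_continuousP _ _).1 e1 _ _; split => //=; rewrite in_itv /= t0 tle.
    apply: within_empty; apply: filterS (nbhs_snd_gt (z := (x, t)) tgt).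
    by move=> [y s] /= ts [_]; rewrite /= in_itv /= => /andP[_ ]; rewrite leNgt ts.
  + have [tge|tlt] := lerP (1/2) t.
      by apply: (subspace_continuousP _ _).1 e2 _ _; split => //=; rewrite in_itv /= t1 tge.
    apply: within_empty; apply: filterS (nbhs_snd_lt (z := (x, t)) tlt).
    by move=> [y s] /= ts [_]; rewrite /= in_itv /= => /andP[+ _]; rewrite leNgt ts.
- move=> x Ux; rewrite /H /=.
  have -> : (0 : real) <= 1/2 by lra.
  by rewrite mulr0 H10.
- move=> x Ux; rewrite /H /=.
  have -> : ((1 : real) <= 1/2) = false by apply/negbTE; rewrite -ltNge; lra.
  have -> : 2 * 1 - 1 = 1 :> real by lra.
  by rewrite H21.
Qed.

Definition xn {n} (x : simplex_space n) (k : nat) : real :=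
  if (k < n.+1)%N then x (inord k) else 0.

Lemma xn_ord n (x : simplex_space n) (k : 'I_n.+1) : xn x k = x k.
Proof. by rewrite /xn ltn_ord inord_val. Qed.

Lemma xn_out n (x : simplex_space n) k : (n < k)%N -> xn x k = 0.
Proof. by move=> h; rewrite /xn ifF //; apply/negbTE; rewrite -leqNgt. Qed.

Lemma simplex_ext n (x y : simplex_space n) :
  (forall k, (k < n.+1)%N -> xn x k = xn y k) -> x = y.
Proof.
move=> h; apply: funext => k; rewrite -!xn_ord; exact: h (ltn_ord k).
Qed.

Definition dn (j : nat) (y : nat -> real) (k : nat) : real :=
  if (k < j)%N then y k else if k == j then 0 else y k.-1.

Lemma xn_face n (j : 'I_n.+2) (x : simplex_space n) k :
  xn (face_map j x) k = dn j (xn x) k.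
Proof.
rewrite /xn /dn /face_map.
case: (ltnP k n.+2) => hk.
  have vk : nat_of_ord (inord k : 'I_n.+2) = k by apply: inordK.
  case: (unliftP j (inord k)) => [[k' k'lt]|] e.
    have ek : k = bump j k' by rewrite -vk e.
    clear e vk; rewrite /bump /= in ek.
    case: (leqP j k') => hjk; [rewrite hjk in ek | rewrite leqNgt hjk in ek]; rewrite /= in ek.
      have -> : (k < j)%N = false by lia.
      have -> : (k == j) = false by lia.
      have -> : (k.-1 < n.+1)%N by lia.
      by congr x; apply: val_inj; rewrite /= inordK; lia.
    have -> : (k < j)%N by lia.
    have -> : (k < n.+1)%N by lia.
    by congr x; apply: val_inj; rewrite /= inordK; lia.
  have ekj : k = j by rewrite -vk e.
  by rewrite ekj ltnn eqxx.
have -> : (k < n.+1)%N = false by lia.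
have -> : (k < j)%N = false by have := ltn_ord j; lia.
have -> : (k == j) = false by have := ltn_ord j; lia.
have -> : (k.-1 < n.+1)%N = false by lia.
by [].
Qed.

Definition pn (i : nat) (y : nat -> real) (k : nat) : real :=
  if (k < i)%N then y k else if k == i then y k + y k.+1 else y k.+1.

Ltac natcase :=
  repeat (case: ifP => ?); try (exfalso; lia);
  try (by congr (_ _); lia);
  try (by rewrite ?add0r ?addr0; congr (_ _); lia);
  try (by congr (_ _ + _ _); congr (_ _); lia);
  try (by f_equal; f_equal; lia).

Lemma pn_dn_lt i j y k : (j < i)%N -> pn i (dn j y) k = dn j (pn i.-1 y) k.
Proof. move=> ji; rewrite /pn /dn; natcase. Qed.

Lemma pn_dn_gt i j y k : (i.+1 < j)%N -> pn i (dn j y) k = dn j.-1 (pn i y) k.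
Proof. move=> ij; rewrite /pn /dn; natcase. Qed.

Lemma pn_dn_eq i y k : pn i (dn i y) k = y k.
Proof. rewrite /pn /dn; natcase. Qed.

Lemma pn_dn_eqS i y k : pn i (dn i.+1 y) k = y k.
Proof. rewrite /pn /dn; natcase. Qed.

Definition Sn (y : nat -> real) (N : nat) : real := \sum_(k < N) y k.

Lemma Sn0 y : Sn y 0 = 0.
Proof. by rewrite /Sn big_ord0. Qed.

Lemma SnS y N : Sn y N.+1 = Sn y N + y N.
Proof. by rewrite /Sn big_ord_recr. Qed.

Lemma Sn_ext y z N : (forall k, y k = z k) -> Sn y N = Sn z N.
Proof. by move=> h; apply: eq_bigr => k _; rewrite h. Qed.

Lemma Sn_dn j y N : Sn (dn j y) N = if (N <= j)%N then Sn y N else Sn y N.-1.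
Proof.
elim: N => [|N IH]; first by rewrite !Sn0.
rewrite SnS IH /dn.
case: (ltngtP N j) => hNj.
- by rewrite SnS.
- by case: N hNj {IH} => [|N] //= _; rewrite SnS.
- by rewrite addr0.
Qed.

Lemma Sn_pn i y N : Sn (pn i y) N = if (N <= i)%N then Sn y N else Sn y N.+1.
Proof.
elim: N => [|N IH]; first by rewrite !Sn0.
rewrite SnS IH /pn.
case: (ltngtP N i) => hNi.
- by rewrite SnS.
- by rewrite (SnS _ N.+1).
- by rewrite addrA -!SnS.
Qed.

Lemma Sn_mono y N d : (forall k, 0 <= y k) -> Sn y N <= Sn y (N + d).
Proof.
move=> y0; elim: d => [|d IH]; first by rewrite addn0.
by rewrite addnS SnS; apply: (le_trans IH); rewrite lerDl.
Qed.

Lemma Sn_ge0 y N : (forall k, 0 <= y k) -> 0 <= Sn y N.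
Proof. by move=> y0; have := Sn_mono 0 N y0; rewrite Sn0. Qed.

Lemma std_simplexE n (x : simplex_space n) :
  std_simplex n x <-> (forall k, 0 <= xn x k) /\ Sn (xn x) n.+1 = 1.
Proof.
have eS : \sum_i x i = Sn (xn x) n.+1 by apply: eq_bigr => k _; rewrite xn_ord.
split => -[h1 h2]; split.
- by move=> k; rewrite /xn; case: ifP.
- by rewrite -eS.
- by move=> k; rewrite -xn_ord.
- by rewrite eS.
Qed.

Definition pim (m i : nat) (x : simplex_space m.+1) : simplex_space m :=
  fun k => pn i (xn x) k.

Definition tau (m i : nat) (x : simplex_space m.+1) : real := 1 - Sn (xn x) i.+1.
Arguments pim m i x : clear implicits.
Arguments tau m i x : clear implicits.

Lemma xn_pim m i (x : simplex_space m.+1) k : (i <= m)%N ->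
  xn (pim m i x) k = pn i (xn x) k.
Proof.
move=> im; rewrite {1}/xn; case: ifP => hk.
  by rewrite /pim inordK.
rewrite /pn ifF; last by lia.
rewrite ifF; last by lia.
by rewrite xn_out //; lia.
Qed.

Lemma face_simplex n (j : 'I_n.+2) (x : simplex_space n) :
  std_simplex n x -> std_simplex n.+1 (face_map j x).
Proof.
move=> /std_simplexE [h0 h1]; apply/std_simplexE; split.
  by move=> k; rewrite xn_face /dn; case: ifP => _ //; case: ifP.
rewrite (Sn_ext _ (xn_face j x)) Sn_dn ifF //.
by apply/negbTE; rewrite -ltnNge ltnS; have := ltn_ord j; lia.
Qed.

Lemma pim_simplex m i (x : simplex_space m.+1) : (i <= m)%N ->
  std_simplex m.+1 x -> std_simplex m (pim m i x).
Proof.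
move=> im /std_simplexE [h0 h1]; apply/std_simplexE; split.
  move=> k; rewrite xn_pim // /pn; case: ifP => _ //; case: ifP => _ //.
  exact: addr_ge0.
rewrite (Sn_ext _ (fun k => xn_pim x k im)) Sn_pn ifF //.
by apply/negbTE; rewrite -ltnNge; lia.
Qed.

Lemma tau_range m i (x : simplex_space m.+1) : (i <= m)%N ->
  std_simplex m.+1 x -> tau m i x \in `[0%R, 1%R].
Proof.
move=> im /std_simplexE [h0 h1]; rewrite /tau in_itv /=; apply/andP; split.
  rewrite subr_ge0 -h1.
  have -> : m.+2 = (i.+1 + (m.+1 - i))%N by lia.
  exact: Sn_mono.
by rewrite lerBlDr lerDl; apply: Sn_ge0.
Qed.

Lemma xn_cont n k : continuous (fun x : simplex_space n => xn x k).
Proof.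
rewrite /xn; case: (k < n.+1)%N; last exact: rc_cst.
exact: (@proj_continuous _ (fun _ : 'I_n.+1 => real) (inord k)).
Qed.

Lemma Sn_cont n N : continuous (fun x : simplex_space n => Sn (xn x) N).
Proof.
elim: N => [|N IH].
  have -> : (fun x : simplex_space n => Sn (xn x) 0) = fun _ => 0.
    by apply: funext => x; rewrite Sn0.
  exact: rc_cst.
have -> : (fun x : simplex_space n => Sn (xn x) N.+1) =
  fun x => Sn (xn x) N + xn x N by apply: funext => x; rewrite SnS.
apply: rc_add => //; exact: xn_cont.
Qed.

Lemma tau_cont m i : continuous (tau m i).
Proof. by apply: rc_sub; [exact: rc_cst | exact: Sn_cont]. Qed.

Lemma ptws_cont a b (g : simplex_space a -> simplex_space b) :
  (forall k : 'I_b.+1, continuous (fun x : simplex_space a => g x k)) -> continuous g.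
Proof.
move=> h x; apply/cvg_sup => i A /= hA.
have := hA; rewrite nbhsE => -[B [oB Bx] BA].
case: oB => C oC eC.
have : nbhs (g x i) C.
  apply: open_nbhs_nbhs; split => //.
  by move: Bx; rewrite -eC.
move/(h i x) => hC.
have hC' : nbhs x [set y | C (g y i)] := hC.
move: hC'; rewrite nbhsE => -[D oD DC].
exists D => // y Dy; apply: BA; rewrite -eC; exact: DC.
Qed.

Lemma pim_cont m i : continuous (pim m i).
Proof.
apply: ptws_cont => k; rewrite /pim /pn.
case: (k < i)%N; first exact: xn_cont.
case: (_ == _); last exact: xn_cont.
by apply: rc_add; exact: xn_cont.
Qed.

Lemma face_cont n (j : 'I_n.+2) : continuous (face_map j : simplex_space n -> _).
Proof.
apply: ptws_cont => k; rewrite /face_map.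
case: (unlift j k) => [k'|]; last exact: rc_cst.
exact: (@proj_continuous _ (fun _ : 'I_n.+1 => real) k').
Qed.

Lemma sing_ext n (X : topologicalType) (s t : simplex_space n -> X) :
  (forall x, std_simplex n x -> s x = t x) -> is_sing_simplex s -> is_sing_simplex t.
Proof.
move=> h; apply: subspace_eq_continuous => x; rewrite inE => hx; exact: h x hx.
Qed.

Lemma sing_comp_l n (X Y : topologicalType) (phi : X -> Y) (s : simplex_space n -> X) :
  continuous phi -> is_sing_simplex s -> is_sing_simplex (phi \o s).
Proof.
move=> cp hs; apply: (@wcomp _ _ _ _ setT) => //.
exact: continuous_subspaceT.
Qed.

Lemma sing_face n (X : topologicalType) (j : 'I_n.+2) (s : simplex_space n.+1 -> X) :
  is_sing_simplex s -> is_sing_simplex (s \o face_map j).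
Proof.
move=> hs; apply: (wcomp _ _ hs); first by move=> x; exact: face_simplex.
apply: continuous_subspaceT; exact: face_cont.
Qed.

Definition prism {A X : topologicalType} (H : A * real -> X) (m i : nat)
  (s : simplex_space m -> A) : simplex_space m.+1 -> X :=
  fun x => H (s (pim m i x), tau m i x).
Arguments prism {A X} H m i s x.

Lemma sing_prism (A X : topologicalType) (H : A * real -> X) m i (s : simplex_space m -> A) :
  {within setT `*` `[0%R, 1%R], continuous H} -> (i <= m)%N ->
  is_sing_simplex s -> is_sing_simplex (prism H m i s).
Proof.
move=> cH im hs.
apply: (wcomp (g := fun x => (s (pim m i x), tau m i x)) _ _ cH).
  by move=> x hx; split => //=; exact: tau_range.
apply: wpair.
  apply: (wcomp _ _ hs); first by move=> x; exact: pim_simplex.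
  apply: continuous_subspaceT; exact: pim_cont.
apply: continuous_subspaceT; exact: tau_cont.
Qed.

Lemma pullback_comp (K : comPzRingType) (A B X : topologicalType) (psi : A -> B)
  (phi : B -> X) n (c : cochain K X n) :
  continuous psi -> pullback psi (pullback phi c) = pullback (phi \o psi) c.
Proof.
move=> cp; apply: funext => s; rewrite /pullback.
case: asboolP => hs //.
by rewrite asboolT //; exact: sing_comp_l.
Qed.

Lemma pullback_cochain (K : comPzRingType) (A X : topologicalType) (phi : A -> X) n
  (c : cochain K X n) :
  continuous phi -> is_cochain c -> is_cochain (pullback phi c).
Proof.
move=> cp [c1 c2]; split.
  move=> s t st; rewrite /pullback.
  case: asboolP => hs; case: asboolP => ht //.
  - by apply: c1 => x hx /=; rewrite st.
  - by exfalso; apply: ht; exact: sing_ext st hs.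
  - by exfalso; apply: hs; apply: sing_ext ht => x hx; rewrite st.
by move=> s hs; rewrite /pullback asboolF.
Qed.

Lemma pullback_coboundary (K : comPzRingType) (A X : topologicalType) (phi : A -> X) n
  (c : cochain K X n) s :
  continuous phi -> pullback phi (coboundary c) s = coboundary (pullback phi c) s.
Proof.
move=> cp; rewrite /pullback /coboundary.
case: asboolP => hs //.
rewrite asboolT; last exact: sing_comp_l.
apply: eq_bigr => i _; congr (_ * _).
by rewrite asboolT //; exact: sing_face.
Qed.

Lemma coboundaryD (K : comPzRingType) (X : topologicalType) n (b1 b2 : cochain K X n) s :
  coboundary (fun t => b1 t + b2 t) s = coboundary b1 s + coboundary b2 s.
Proof.
rewrite /coboundary; case: asboolP => _; last by rewrite addr0.
by rewrite -big_split; apply: eq_bigr => i _; rewrite mulrDr.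
Qed.

Lemma coboundaryB (K : comPzRingType) (X : topologicalType) n (b1 b2 : cochain K X n) s :
  coboundary (fun t => b1 t - b2 t) s = coboundary b1 s - coboundary b2 s.
Proof.
rewrite /coboundary; case: asboolP => _; last by rewrite subr0.
by rewrite -sumrB; apply: eq_bigr => i _; rewrite mulrBr.
Qed.

Lemma cochainD (K : comPzRingType) (X : topologicalType) n (b1 b2 : cochain K X n) :
  is_cochain b1 -> is_cochain b2 -> is_cochain (fun t => b1 t + b2 t).
Proof.
move=> [h1 h2] [k1 k2]; split.
  by move=> s t st; rewrite (h1 _ _ st) (k1 _ _ st).
by move=> s hs; rewrite h2 // k2 // addr0.
Qed.

Lemma cochainB (K : comPzRingType) (X : topologicalType) n (b1 b2 : cochain K X n) :
  is_cochain b1 -> is_cochain b2 -> is_cochain (fun t => b1 t - b2 t).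
Proof.
move=> [h1 h2] [k1 k2]; split.
  by move=> s t st; rewrite (h1 _ _ st) (k1 _ _ st).
by move=> s hs; rewrite h2 // k2 // subr0.
Qed.

Lemma coboundary_pullback (K : comPzRingType) (A X : topologicalType) (phi : A -> X) n
  (c : cochain K X n) :
  continuous phi -> is_coboundary c -> is_coboundary (pullback phi c).
Proof.
move=> cp; case: n c => [|n] c /=.
  by move=> h s; rewrite /pullback h; case: asboolP.
move=> [b [hb e]]; exists (pullback phi b); split; first exact: pullback_cochain.
move=> s; rewrite -pullback_coboundary //.
by rewrite /pullback e.
Qed.

Lemma pullback_id (K : comPzRingType) (X : topologicalType) n (c : cochain K X n) :
  is_cochain c -> pullback idfun c = c.
Proof.
move=> [_ c2]; apply: funext => s; rewrite /pullback.
by case: asboolP => hs //; rewrite c2.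
Qed.

Lemma xn_face_inord n j (x : simplex_space n) l : (j < n.+2)%N ->
  xn (face_map (inord j) x) l = dn j (xn x) l.
Proof. by move=> hj; rewrite xn_face inordK. Qed.
Arguments xn_face_inord {n} j x l _.

Lemma pn_ext i y z l : (forall k, y k = z k) -> pn i y l = pn i z l.
Proof. by move=> h; rewrite /pn !h. Qed.

Lemma dn_ext j y z l : (forall k, y k = z k) -> dn j y l = dn j z l.
Proof. by move=> h; rewrite /dn !h. Qed.


Lemma prism_face_eq (A X : topologicalType) (H : A * real -> X) m i (s : simplex_space m -> A) :
  (i <= m)%N ->
  prism H m i s \o face_map (inord i) = fun x => H (s x, 1 - Sn (xn x) i).
Proof.
move=> im; apply: funext => x; rewrite /prism /=; congr H; congr pair.
  congr s; apply: simplex_ext => l _.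
  rewrite xn_pim // (pn_ext _ _ (fun q => xn_face_inord _ x q _)); last by lia.
  by rewrite pn_dn_eq.
rewrite /tau (Sn_ext _ (fun q => xn_face_inord _ x q _)); last by lia.
by rewrite Sn_dn ifF //; lia.
Qed.

Lemma prism_face_eqS (A X : topologicalType) (H : A * real -> X) m i (s : simplex_space m -> A) :
  (i <= m)%N ->
  prism H m i s \o face_map (inord i.+1) = fun x => H (s x, 1 - Sn (xn x) i.+1).
Proof.
move=> im; apply: funext => x; rewrite /prism /=; congr H; congr pair.
  congr s; apply: simplex_ext => l _.
  rewrite xn_pim // (pn_ext _ _ (fun q => xn_face_inord _ x q _)); last by lia.
  by rewrite pn_dn_eqS.
rewrite /tau (Sn_ext _ (fun q => xn_face_inord _ x q _)); last by lia.
by rewrite Sn_dn ifT //; lia.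
Qed.

Lemma prism_face_lt (A X : topologicalType) (H : A * real -> X) k i j
  (s : simplex_space k.+1 -> A) :
  (j < i)%N -> (i <= k.+1)%N ->
  prism H k.+1 i s \o face_map (inord j) = prism H k i.-1 (s \o face_map (inord j)).
Proof.
move=> ji ik; apply: funext => x; rewrite /prism /=; congr H; congr pair.
  congr s; apply: simplex_ext => l _.
  rewrite xn_pim // (pn_ext _ _ (fun q => xn_face_inord _ x q _)); last by lia.
  rewrite pn_dn_lt // xn_face_inord; last by lia.
  by apply: dn_ext => q; rewrite xn_pim //; lia.
rewrite /tau (Sn_ext _ (fun q => xn_face_inord _ x q _)); last by lia.
rewrite Sn_dn ifF; last by lia.
by congr (_ - Sn _ _); lia.
Qed.

Lemma prism_face_gt (A X : topologicalType) (H : A * real -> X) k i j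
  (s : simplex_space k.+1 -> A) :
  (i.+1 < j)%N -> (j <= k.+2)%N ->
  prism H k.+1 i s \o face_map (inord j) = prism H k i (s \o face_map (inord j.-1)).
Proof.
move=> ij jk; apply: funext => x; rewrite /prism /=; congr H; congr pair.
  congr s; apply: simplex_ext => l _.
  rewrite xn_pim; last by lia.
  rewrite (pn_ext _ _ (fun q => xn_face_inord _ x q _)); last by lia.
  rewrite pn_dn_gt // xn_face_inord; last by lia.
  by apply: dn_ext => q; rewrite xn_pim //; lia.
rewrite /tau (Sn_ext _ (fun q => xn_face_inord _ x q _)); last by lia.
by rewrite Sn_dn ifT //; lia.
Qed.

Lemma signK (K : comPzRingType) (i : nat) (a : K) : (-1) ^+ i * ((-1) ^+ i * a) = a.
Proof. by rewrite mulrA -exprMn mulrNN mulr1 expr1n mul1r. Qed.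

Lemma signSK (K : comPzRingType) (i : nat) (a : K) : (-1) ^+ i * ((-1) ^+ i.+1 * a) = - a.
Proof. by rewrite exprS mulN1r mulNr mulrN signK. Qed.

Lemma HI_split (K : comPzRingType) (A X : topologicalType) (H : A * real -> X) m
  (c : cochain K X m) (s : simplex_space m -> A) :
  {within setT `*` `[0%R, 1%R], continuous H} -> is_cocycle c -> is_sing_simplex s ->
  c (fun x => H (s x, 1 - Sn (xn x) 0)) - c (fun x => H (s x, 1 - Sn (xn x) m.+1))
  + \sum_(0 <= i < m.+1) \sum_(0 <= j < i)
      (-1) ^+ i * ((-1) ^+ j * c (prism H m i s \o face_map (inord j)))
  + \sum_(0 <= i < m.+1) \sum_(i.+2 <= j < m.+2)
      (-1) ^+ i * ((-1) ^+ j * c (prism H m i s \o face_map (inord j)))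
  = 0.
Proof.
move=> cH [cc cz] hs.
pose a i j := (-1) ^+ i * ((-1) ^+ j * c (prism H m i s \o face_map (inord j))).
pose Q l := c (fun x => H (s x, 1 - Sn (xn x) l)).
have E : \sum_(0 <= i < m.+1) \sum_(0 <= j < m.+2) a i j = 0.
  rewrite big_nat big1 // => i /andP[_ him].
  have := cz (prism H m i s); rewrite /coboundary asboolT; last first.
    by apply: sing_prism => //; lia.
  move=> h.
  have -> : \sum_(0 <= j < m.+2) a i j = (-1) ^+ i *
      \sum_(j < m.+2) (-1) ^+ j * c (prism H m i s \o face_map j).
    by rewrite mulr_sumr big_mkord; apply: eq_bigr => j _; rewrite /a inord_val.
  by rewrite h mulr0.
have spl : forall i, (0 <= i < m.+1)%N -> \sum_(0 <= j < m.+2) a i j =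
    \sum_(0 <= j < i) a i j + (Q i - Q i.+1) + \sum_(i.+2 <= j < m.+2) a i j.
  move=> i /andP[_ him].
  rewrite (@big_cat_nat _ _ _ i 0 m.+2) //=; last by lia.
  rewrite (@big_ltn _ _ _ i m.+2); last by lia.
  rewrite (@big_ltn _ _ _ i.+1 m.+2); last by lia.
  have -> : a i i = Q i by rewrite /a signK prism_face_eq //; lia.
  have -> : a i i.+1 = - Q i.+1 by rewrite /a signSK prism_face_eqS //; lia.
  by rewrite !addrA.
rewrite (eq_big_nat _ _ spl) big_split big_split /= in E.
have tel : forall n, \sum_(0 <= i < n) (Q i - Q i.+1) = Q 0 - Q n.
  elim => [|n IH]; first by rewrite big_geq // subrr.
  by rewrite big_nat_recr //= IH addrA subrK.
rewrite tel in E; apply: (etrans _ E).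
by rewrite [in RHS](addrC _ (Q 0 - Q m.+1)).
Qed.

Lemma HI0 (K : comPzRingType) (A X : topologicalType) (H : A * real -> X)
  (c : cochain K X 0) (s : simplex_space 0 -> A) :
  {within setT `*` `[0%R, 1%R], continuous H} -> is_cocycle c -> is_sing_simplex s ->
  c (fun x => H (s x, 1 - Sn (xn x) 0)) = c (fun x => H (s x, 1 - Sn (xn x) 1)).
Proof.
move=> cH cc hs; have := HI_split cH cc hs.
rewrite !big_nat1 !big_geq // !addr0 => /eqP; rewrite subr_eq0 => /eqP //.
Qed.

Definition bpr (K : comPzRingType) (A X : topologicalType) (H : A * real -> X) k
  (c : cochain K X k.+1) : cochain K A k :=
  fun t => if `[< is_sing_simplex t >] then
    \sum_(0 <= i < k.+1) (-1) ^+ i * c (prism H k i t) else 0.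

Lemma HIS (K : comPzRingType) (A X : topologicalType) (H : A * real -> X) k
  (c : cochain K X k.+1) (s : simplex_space k.+1 -> A) :
  {within setT `*` `[0%R, 1%R], continuous H} -> is_cocycle c -> is_sing_simplex s ->
  c (fun x => H (s x, 1 - Sn (xn x) 0)) - c (fun x => H (s x, 1 - Sn (xn x) k.+2))
  = coboundary (bpr H c) s.
Proof.
move=> cH cc hs; have := HI_split cH cc hs.
pose G i j := (-1) ^+ i * ((-1) ^+ j * c (prism H k i (s \o face_map (inord j)))).
have T1 : \sum_(0 <= i < k.+2) \sum_(0 <= j < i)
      (-1) ^+ i * ((-1) ^+ j * c (prism H k.+1 i s \o face_map (inord j)))
    = \sum_(0 <= i < k.+1) \sum_(0 <= j < i.+1) - G i j.
  rewrite big_nat_recl // [X in X + _]big_geq // add0r.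
  apply: eq_big_nat => i /andP[_ hi]; apply: eq_big_nat => j /andP[_ hj].
  have -> : prism H k.+1 i.+1 s \o face_map (inord j) =
    prism H k i (s \o face_map (inord j)) by apply: prism_face_lt; lia.
  by rewrite /G exprS mulN1r mulNr.
have T2 : \sum_(0 <= i < k.+2) \sum_(i.+2 <= j < k.+3)
      (-1) ^+ i * ((-1) ^+ j * c (prism H k.+1 i s \o face_map (inord j)))
    = \sum_(0 <= i < k.+1) \sum_(i.+1 <= j < k.+2) - G i j.
  rewrite big_nat_recr //= [X in _ + X]big_geq // addr0.
  apply: eq_big_nat => i /andP[_ hi]; rewrite big_add1 /=.
  apply: eq_big_nat => j /andP[hj1 hj2].
  have -> : prism H k.+1 i s \o face_map (inord j.+1) =
    prism H k i (s \o face_map (inord j)) by apply: prism_face_gt; lia.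
  by rewrite /G exprS mulN1r mulNr mulrN.
rewrite T1 T2 -addrA -big_split /=.
have T3 : \sum_(0 <= i < k.+1) (\sum_(0 <= j < i.+1) - G i j + \sum_(i.+1 <= j < k.+2) - G i j)
    = - coboundary (bpr H c) s.
  have e1 : forall i, (0 <= i < k.+1)%N ->
      \sum_(0 <= j < i.+1) - G i j + \sum_(i.+1 <= j < k.+2) - G i j =
      \sum_(0 <= j < k.+2) - G i j.
    move=> i /andP[_ hi]; rewrite -(@big_cat_nat _ _ _ i.+1 0 k.+2) //; lia.
  rewrite (eq_big_nat _ _ e1) (exchange_big_nat _ 0 k.+1 0 k.+2) /=.
  rewrite /coboundary asboolT // -sumrN.
  rewrite (eq_bigr (fun j : 'I_k.+2 => - ((-1) ^+ (nat_of_ord j) *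
     bpr H c (s \o face_map (inord (nat_of_ord j)))))); last by move=> j _; rewrite inord_val.
  rewrite -(big_mkord xpredT (fun j => - ((-1) ^+ j * bpr H c (s \o face_map (inord j))))).
  apply: eq_big_nat => j /andP[_ hj].
  rewrite /bpr asboolT; last exact: sing_face.
  rewrite mulr_sumr -sumrN; apply: eq_big_nat => i _; by rewrite /G mulrCA.
rewrite T3 => /eqP; rewrite subr_eq0 => /eqP //.
Qed.

Lemma bpr_cochain (K : comPzRingType) (A X : topologicalType) (H : A * real -> X) k
  (c : cochain K X k.+1) : is_cochain c -> is_cochain (bpr H c).
Proof.
move=> [c1 c2]; split; last by move=> t ht; rewrite /bpr asboolF.
move=> t t' tt'; rewrite /bpr.
case: asboolP => ht; case: asboolP => ht' //.
- apply: eq_big_nat => i /andP[_ hi]; congr (_ * _); apply: c1 => x hx.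
  by rewrite /prism tt' //; apply: pim_simplex => //; lia.
- by exfalso; apply: ht'; exact: sing_ext tt' ht.
- by exfalso; apply: ht; apply: sing_ext ht' => x hx; rewrite tt'.
Qed.

Lemma cobound_nonsing (K : comPzRingType) (X : topologicalType) n (b : cochain K X n) s :
  ~ is_sing_simplex s -> coboundary b s = 0.
Proof. by move=> hs; rewrite /coboundary asboolF. Qed.

Lemma HI (K : comPzRingType) (A X : topologicalType) (H : A * real -> X) (h0 h1 : A -> X)
  n (c : cochain K X n) :
  {within setT `*` `[0%R, 1%R], continuous H} ->
  (forall a, H (a, 0) = h0 a) -> (forall a, H (a, 1) = h1 a) -> is_cocycle c ->
  is_coboundary (pullback h0 c) <-> is_coboundary (pullback h1 c).
Proof.
move=> cH e0 e1 cc.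
have E1 : forall s : simplex_space n -> A,
    c (h1 \o s) = c (fun x => H (s x, 1 - Sn (xn x) 0)).
  by move=> s; congr c; apply: funext => x; rewrite /= Sn0 subr0 e1.
have E0 : forall s : simplex_space n -> A,
    c (h0 \o s) = c (fun x => H (s x, 1 - Sn (xn x) n.+1)).
  move=> s; case: cc => -[cc1 _] _; apply: cc1 => x /std_simplexE [_ ->].
  by rewrite /= subrr e0.
case: n c cc E0 E1 => [|k] c cc E0 E1 /=.
  have key : forall s, pullback h0 c s = pullback h1 c s.
    move=> s; rewrite /pullback; case: asboolP => hs //.
    by rewrite E0 E1 (HI0 cH cc hs).
  by split => h s; [rewrite -key | rewrite key].
have key : forall s, pullback h1 c s = pullback h0 c s + coboundary (bpr H c) s.
  move=> s; rewrite /pullback; case: asboolP => hs; last first.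
    by rewrite cobound_nonsing // addr0.
  by rewrite -(HIS cH cc hs) E0 E1 addrC subrK.
have bc : is_cochain (bpr H c) by apply: bpr_cochain; case: cc.
split => -[b [hb e]].
  exists (fun t => b t + bpr H c t); split; first exact: cochainD.
  by move=> s; rewrite coboundaryD key e.
exists (fun t => b t - bpr H c t); split; first exact: cochainB.
by move=> s; rewrite coboundaryB -e key addrK.
Qed.

Lemma cont_comp {T U V : topologicalType} (f : T -> U) (g : U -> V) :
  continuous f -> continuous g -> continuous (g \o f).
Proof. by move=> cf cg x; apply: continuous_comp; [exact: cf | exact: cg]. Qed.

Lemma homotopic_on_ext {X Y : topologicalType} (U : set X) (f g f' g' : X -> Y) :
  (forall x, U x -> f x = f' x) -> (forall x, U x -> g x = g' x) ->
  homotopic_on U f g -> homotopic_on U f' g'.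
Proof.
move=> ef eg [H [cH [H0 H1]]]; exists H; split => //; split => x Ux.
  by rewrite H0 // ef.
by rewrite H1 // eg.
Qed.

Lemma chain_side {A X Y X' Y' : topologicalType} (alpha : X' -> X) (beta : Y' -> Y)
  (b : X -> X') (bb : Y -> Y') (F : X -> Y) (F' : X' -> Y') (phi : A -> X) (V : set A) :
  continuous alpha -> continuous b -> continuous bb -> continuous beta ->
  continuous F -> continuous F' -> continuous phi ->
  homotopic (alpha \o b) idfun -> homotopic (bb \o beta) idfun ->
  beta \o F' = F \o alpha ->
  homotopic_on V (F' \o (b \o phi)) (bb \o (F \o phi)).
Proof.
move=> ca cb cbb cbe cF cF' cphi ha hb eF.
have cpsi : continuous (F' \o (b \o phi)) by do 2 apply: cont_comp => //.
have h1 : homotopic_on V (F' \o (b \o phi)) ((bb \o beta) \o (F' \o (b \o phi))).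
  apply: homotopic_on_sym.
  have := homotopic_on_pre (U := V) cpsi (fun _ _ => I) hb.
  by apply: homotopic_on_ext.
have h2 := homotopic_on_comp (cont_comp cF cbb)
   (homotopic_on_pre (U := V) cphi (fun _ _ => I) ha).
apply: homotopic_on_trans h1 _; apply: homotopic_on_ext h2 => x _ //=.
by have := congr1 (fun h => h (b (phi x))) eF => /= ->.
Qed.

Lemma HI_hom (K : comPzRingType) (A X : topologicalType) (h0 h1 : A -> X) n (c : cochain K X n) :
  homotopic h0 h1 -> is_cocycle c ->
  is_coboundary (pullback h0 c) <-> is_coboundary (pullback h1 c).
Proof.
move=> [H [cH [H0 H1]]] cc.
by apply: (HI cH) => // a; [exact: H0 | exact: H1].
Qed.

Lemma hp_equiv (K : comPzRingType) (X Y X' Y' : topologicalType)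
  (f g : X -> Y) (f' g' : X' -> Y') (alpha : X' -> X) (beta : Y' -> Y)
  (b : X -> X') (bb : Y -> Y') (u : forall n, cochain K X n) (k : int) :
  continuous f -> continuous g -> continuous f' -> continuous g' ->
  continuous alpha -> continuous b -> continuous bb -> continuous beta ->
  homotopic (alpha \o b) idfun -> homotopic (bb \o beta) idfun ->
  beta \o f' = f \o alpha -> beta \o g' = g \o alpha ->
  (forall n, is_cocycle (u n)) ->
  hw_prop f' g' (cohom_pullback alpha u) k <-> hw_prop f g u k.
Proof.
move=> cf cg cf' cg' ca cb cbb cbe ha hb ef eg cu; split => P A phi cphi.
  move=> [n [hn [U [oU [cov hU]]]]].
  have cpsi : continuous (b \o phi) by apply: cont_comp.
  have := P A (b \o phi) cpsi.
  have hd : hdist_le (f' \o (b \o phi)) (g' \o (b \o phi)) k.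
    exists n; split => //; exists U; split => //; split => // j.
    apply: homotopic_on_trans (chain_side _ ca cb cbb cbe cf cf' cphi ha hb ef) _.
    apply: homotopic_on_trans; last first.
      apply: homotopic_on_sym; exact: (chain_side _ ca cb cbb cbe cg cg' cphi ha hb eg).
    exact: homotopic_on_comp cbb (hU j).
  move=> /(_ hd) hz m; have := hz m; rewrite /cohom_pullback pullback_comp //.
  have hh : homotopic ((alpha \o b) \o phi) (idfun \o phi).
    exact: homotopic_on_pre cphi (fun _ _ => I) ha.
  by move/(HI_hom hh (cu m)).
move=> [n [hn [U [oU [cov hU]]]]].
have cpsi : continuous (alpha \o phi) by apply: cont_comp.
have := P A (alpha \o phi) cpsi.
have hd : hdist_le (f \o (alpha \o phi)) (g \o (alpha \o phi)) k.
  exists n; split => //; exists U; split => //; split => // j.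
  apply: homotopic_on_ext (homotopic_on_comp cbe (hU j)) => x _ /=.
    by have := congr1 (fun h => h (phi x)) ef.
  by have := congr1 (fun h => h (phi x)) eg.
move=> /(_ hd) hz m; rewrite /cohom_pullback pullback_comp //; exact: hz m.
Qed.

Lemma cz_equiv (K : comPzRingType) (X X' : topologicalType) (alpha : X' -> X) (b : X -> X')
  (u : forall n, cochain K X n) :
  continuous alpha -> continuous b -> homotopic (alpha \o b) idfun ->
  (forall n, is_cocycle (u n)) ->
  cohom_zero (cohom_pullback alpha u) <-> cohom_zero u.
Proof.
move=> ca cb ha cu; split => h m; last exact: coboundary_pullback.
have := coboundary_pullback cb (h m); rewrite /cohom_pullback pullback_comp //.
move/(HI_hom ha (cu m)); rewrite pullback_id //; by case: (cu m).
Qed.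

Unset Implicit Arguments.

Theorem proposition5p6 (K : comPzRingType) (X Y X' Y' : topologicalType)
  (f g : X -> Y) (f' g' : X' -> Y') (alpha : X' -> X) (beta : Y' -> Y) :
  continuous f -> continuous g -> continuous f' -> continuous g' ->
  homotopy_equivalence alpha -> homotopy_equivalence beta ->
  beta \o f' = f \o alpha -> beta \o g' = g \o alpha ->
  forall u : forall n, cochain K X n, cohom_elt u ->
    hw f' g' (cohom_pullback alpha u) = hw f g u.
Proof.
move=> cf cg cf' cg' [ca [b [cb [_ ha]]]] [cbe [bb [cbb [hb _]]]] ef eg u [cu _].
have HP := fun k => hp_equiv k cf cg cf' cg' ca cb cbb cbe ha hb ef eg cu.
have CZ := cz_equiv ca cb ha cu.
have HG : forall k, hw_greatest f' g' (cohom_pullback alpha u) k <-> hw_greatest f g u k.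
  move=> k; split => -[h1 h2]; split.
  - by apply/HP.
  - by move=> j /HP; apply: h2.
  - by apply/HP.
  - by move=> j /HP; apply: h2.
rewrite /hw.
case: (pselect (cohom_zero (cohom_pullback alpha u))) => hv;
  case: (pselect (cohom_zero u)) => hu //.
- by exfalso; apply: hu; apply/CZ.
- by exfalso; apply: hv; apply/CZ.
case: (pselect (exists k, hw_greatest f' g' (cohom_pullback alpha u) k)) => e1;
  case: (pselect (exists k, hw_greatest f g u k)) => e2 //.
- case: (cid e1) => k1 hk1; case: (cid e2) => k2 hk2 /=.
  have [g1 m1] := hk1; have [g2 m2] := hk2.
  have -> : k1 = k2.
    apply/eqP; rewrite eq_le; apply/andP; split.
      by apply: m2; apply/HP.
    by apply: m1; apply/HP.
  by [].
- by exfalso; apply: e2; case: e1 => k /HG hk; exists k.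
- by exfalso; apply: e1; case: e2 => k /HG hk; exists k.
Qed.
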